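(* Let $f$ be a real-valued function of two arguments that is monotonic (non-decreasing) in its first argument and anti-monotonic (non-increasing) in its second argument. Let $x$ and $y$ be variables, each hosted on a single process of a computation, such that either both $x$ and $y$ are monotonically non-decreasing or both are monotonically non-increasing. Then, for every constant $c$ and every $\mathtt{relop} \in \{<, \leq, >, \geq\}$, the predicate $f(x,y)\ \mathtt{relop}\ c$ is regular.
   Context: A computation is a directed graph $\langle E, \rightarrow\rangle$ whose vertices (events) are partitioned among processes $p_1,\dots,p_n$; the events of each process are totally ordered in real time, each process $p_i$ has a fictitious initial event $\bot_i$ (first) and final event $\top_i$ (last), the path relation of the graph contains Lamport's happened-before relation, all initial events lie in one strongly connected component and all final events lie in one strongly connected component. A subset $C \subseteq E$ is a consistent cut if for every edge $(u,v)$, $v \in C$ implies $u \in C$; $\emptyset$ and $E$ are the trivial consistent cuts. A (global) predicate is a boolean function of process variables, evaluated at a non-trivial consistent cut $C$ using the values of the variables immediately after all events in $C$ have been executed; for a variable $x$ hosted on a process, $x(C)$ is its value after the last event of that process in $C$. A variable is monotonically non-decreasing (resp. non-increasing) if its value never decreases (resp. increases) along the events of its process. A predicate $b$ is regular if whenever consistent cuts $C_1$ and $C_2$ satisfy $b$, so do $C_1 \cap C_2$ and $C_1 \cup C_2$. *)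

(* Defs.v *)
From HB Require Import structures.
From mathcomp Require Import all_boot all_order all_algebra.
From mathcomp Require Import reals.
Set Implicit Arguments. Unset Strict Implicit. Unset Printing Implicit Defensive.
Import Order.TTheory GRing.Theory Num.Theory.
Local Open Scope ring_scope.

Record computation (n : nat) (E : finType) := Computation {
  edge : rel E;
  proc : E -> 'I_n;
  po   : rel E;
  msg  : rel E;
  bot  : 'I_n -> E;                  (* fictitious initial events            *)
  top  : 'I_n -> E;                  (* fictitious final events              *)
  po_proc  : forall e f, po e f -> proc e = proc f;
  po_irr   : forall e, ~~ po e e;
  po_trans : forall e f g, po e f -> po f g -> po e g;
  po_total : forall e f, proc e = proc f -> e <> f -> po e f \/ po f e;
  bot_proc : forall i, proc (bot i) = i;
  top_proc : forall i, proc (top i) = i;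
  bot_first : forall i e, proc e = i -> e <> bot i -> po (bot i) e;
  top_last  : forall i e, proc e = i -> e <> top i -> po e (top i);
  (* the path relation contains Lamport's happened-before relation, i.e. the
     transitive closure of process order and message order *)
  hb_po  : forall e f, po e f -> connect edge e f;
  hb_msg : forall e f, msg e f -> connect edge e f;
  bot_scc : forall i j, connect edge (bot i) (bot j);
  top_scc : forall i j, connect edge (top i) (top j)
}.

Section Cuts.
Variables (n : nat) (E : finType) (G : computation n E).

Definition consistent (C : {set E}) : Prop :=
  forall u v, edge G u v -> v \in C -> u \in C.

Definition nontrivial_cut (C : {set E}) : Prop :=
  consistent C /\ C != set0 /\ C != [set: E].

Definition last_in (C : {set E}) (p : 'I_n) (e : E) : bool :=
  [&& e \in C, proc G e == p &
      [forall f, ((f \in C) && (proc G f == p)) ==> ~~ po G e f]].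

(* A variable hosted on process p: val e is its value immediately after
   event e (meaningful for events e of process p). *)
Definition var_at (R : Type) (p : 'I_n) (val : E -> R) (C : {set E}) : R :=
  match [pick e | last_in C p e] with
  | Some e => val e
  | None => val (bot G p)   (* never used on non-trivial consistent cuts *)
  end.

Definition nondecreasing_var (R : realType) (p : 'I_n) (val : E -> R) : Prop :=
  forall e f, proc G e = p -> proc G f = p -> po G e f -> val e <= val f.

Definition nonincreasing_var (R : realType) (p : 'I_n) (val : E -> R) : Prop :=
  forall e f, proc G e = p -> proc G f = p -> po G e f -> val f <= val e.

Definition regular (b : {set E} -> Prop) : Prop :=
  forall C1 C2, nontrivial_cut C1 -> nontrivial_cut C2 -> b C1 -> b C2 ->
    b (C1 :&: C2) /\ b (C1 :|: C2).

End Cuts.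

Inductive relop := RLt | RLe | RGt | RGe.

Definition eval_relop (R : realType) (op : relop) (a c : R) : bool :=
  match op with
  | RLt => a < c
  | RLe => a <= c
  | RGt => a > c
  | RGe => a >= c
  end.

(* Main.v *)
Require Import Defs.
From HB Require Import structures.
From mathcomp Require Import all_boot all_order all_algebra.
From mathcomp Require Import reals.
Import Order.TTheory GRing.Theory Num.Theory.
Local Open Scope ring_scope.
Set Implicit Arguments. Unset Strict Implicit.

Section Cut.
Variables (n : nat) (E : finType) (G : computation n E).

Definition ple (e f : E) := (e == f) || po G e f.

Lemma cons_connect C u v : consistent G C -> connect (edge G) u v -> v \in C -> u \in C.
Proof.
move=> cC /connectP [s pth ->].
elim: s u pth => [|w s IH] u //= /andP [euw pth] Hl.
exact: (cC _ _ euw (IH _ pth Hl)).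
Qed.

Lemma ple_in C g l : consistent G C -> ple g l -> l \in C -> g \in C.
Proof.
move=> cC /orP [/eqP -> //| pgl] Hl.
exact (@cons_connect C g l cC (hb_po pgl) Hl).
Qed.

Lemma bot_in C p : consistent G C -> C != set0 -> bot G p \in C.
Proof.
move=> cC /set0Pn [e He].
have Hq : bot G (proc G e) \in C.
  case: (eqVneq e (bot G (proc G e))) => [<- //|ne].
  apply: (@ple_in C _ e cC _ He); apply/orP; right; apply: bot_first => //; exact/eqP.
exact (@cons_connect C _ _ cC (bot_scc G p (proc G e)) Hq).
Qed.

Lemma last_exists (C : {set E}) p : bot G p \in C -> exists e, last_in G C p e.
Proof.
move=> Hb.
pose P := [pred e | (e \in C) && (proc G e == p)].
have Pb : P (bot G p) by rewrite /P /= Hb bot_proc eqxx.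
case: (@arg_minnP _ _ P (fun e => #|[set g | po G e g]|) Pb) => e /andP [eC ep] Hmin.
exists e; rewrite /last_in eC ep /=; apply/forallP => g; apply/implyP => Hg.
apply/negP => peg.
have := Hmin g Hg.
have : [set h | po G g h] \proper [set h | po G e h].
  apply/properP; split.
    apply/subsetP => h; rewrite !inE => pgh; exact: (po_trans peg pgh).
  by exists g; rewrite !inE // po_irr.
move/proper_card => lt le; by move: (leq_trans lt le); rewrite ltnn.
Qed.

Lemma last_uniq (C : {set E}) p e e' : last_in G C p e -> last_in G C p e' -> e = e'.
Proof.
move=> /and3P [eC /eqP ep /forallP He] /and3P [eC' /eqP ep' /forallP He'].
apply/eqP; apply/negP => /negP ne.
have := He e'; rewrite eC' ep' eqxx /= => /negP h1.
have := He' e; rewrite eC ep eqxx /= => /negP h2.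
case: (po_total (etrans ep (esym ep')) (elimN eqP ne)) => //.
Qed.

Lemma var_atE (R : Type) (C : {set E}) p (v : E -> R) e : last_in G C p e -> var_at G p v C = v e.
Proof.
move=> He; rewrite /var_at; case: pickP => [e' He'|/(_ e)]; last by rewrite He.
by rewrite (last_uniq He' He).
Qed.

Lemma ple_total e f : proc G e = proc G f -> ple e f \/ ple f e.
Proof.
move=> h; case: (eqVneq e f) => [->|ne]; first by left; rewrite /ple eqxx.
case: (po_total h (elimN eqP ne)) => H; [left|right]; by rewrite /ple H orbT.
Qed.

Lemma ple_po_trans e f g : ple e f -> po G f g -> po G e g.
Proof. by case/orP => [/eqP ->//|h1 h2]; exact: po_trans h1 h2. Qed.

Lemma meet_last (C1 C2 : {set E}) p l1 l2 : consistent G C1 -> consistent G C2 ->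
  last_in G C1 p l1 -> last_in G C2 p l2 ->
  (last_in G (C1 :&: C2) p l1 /\ ple l1 l2) \/ (last_in G (C1 :&: C2) p l2 /\ ple l2 l1).
Proof.
move=> c1 c2 H1 H2.
have H1' := H1; have H2' := H2.
move: H1' H2' => /and3P [l1C /eqP l1p /forallP F1] /and3P [l2C /eqP l2p /forallP F2].
case: (ple_total (etrans l1p (esym l2p))) => h; [left|right]; split => //.
- rewrite /last_in inE l1C (ple_in c2 h l2C) l1p eqxx /=.
  apply/forallP => g; apply/implyP; rewrite inE => /andP [/andP [g1 g2] gp].
  by have := F1 g; rewrite g1 gp.
- rewrite /last_in inE l2C (ple_in c1 h l1C) l2p eqxx /=.
  apply/forallP => g; apply/implyP; rewrite inE => /andP [/andP [g1 g2] gp].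
  by have := F2 g; rewrite g2 gp.
Qed.

Lemma join_last (C1 C2 : {set E}) p l1 l2 :
  last_in G C1 p l1 -> last_in G C2 p l2 ->
  (last_in G (C1 :|: C2) p l1 /\ ple l2 l1) \/ (last_in G (C1 :|: C2) p l2 /\ ple l1 l2).
Proof.
move=> H1 H2.
move: H1 H2 => /and3P [l1C /eqP l1p /forallP F1] /and3P [l2C /eqP l2p /forallP F2].
case: (ple_total (etrans l1p (esym l2p))) => h; [right|left]; split => //.
- rewrite /last_in inE l2C orbT l2p eqxx /=.
  apply/forallP => g; apply/implyP; rewrite inE => /andP [/orP [g1|g2] gp].
    apply/negP => pg; have := F1 g; rewrite g1 gp /= (ple_po_trans h pg) //.
  by have := F2 g; rewrite g2 gp.
- rewrite /last_in inE l1C l1p eqxx /=.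
  apply/forallP => g; apply/implyP; rewrite inE => /andP [/orP [g1|g2] gp].
    by have := F1 g; rewrite g1 gp.
  apply/negP => pg; have := F2 g; rewrite g2 gp /= (ple_po_trans h pg) //.
Qed.

End Cut.
Definition le_s (R : realType) (s : bool) (u v : R) := if s then u <= v else v <= u.

Lemma sandwich (R : realType) op (c u v w : R) : u <= v -> v <= w ->
  eval_relop op u c -> eval_relop op w c -> eval_relop op v c.
Proof.
case: op => /= uv vw hu hw.
- exact: le_lt_trans vw hw.
- exact: le_trans vw hw.
- exact: lt_le_trans hu uv.
- exact: le_trans hu uv.
Qed.

Lemma key (R : realType) (f : R -> R -> R)
  (f_mono : forall a a' b, a <= a' -> f a b <= f a' b)
  (f_anti : forall a b b', b <= b' -> f a b' <= f a b) op c s (x1 x2 y1 y2 a b : R) :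
  (a = x1 /\ le_s s x1 x2) \/ (a = x2 /\ le_s s x2 x1) ->
  (b = y1 /\ le_s s y1 y2) \/ (b = y2 /\ le_s s y2 y1) ->
  eval_relop op (f x1 y1) c -> eval_relop op (f x2 y2) c -> eval_relop op (f a b) c.
Proof.
move=> [[-> hx]|[-> hx]] [[-> hy]|[-> hy]] h1 h2 //; rewrite /le_s in hx hy.
- case: s hx hy => hx hy.
  + apply: (sandwich (u := f x1 y1) (w := f x2 y2)) => //; [exact: f_anti| exact: f_mono].
  + apply: (sandwich (u := f x2 y2) (w := f x1 y1)) => //; [exact: f_mono| exact: f_anti].
- case: s hx hy => hx hy.
  + apply: (sandwich (u := f x2 y2) (w := f x1 y1)) => //; [exact: f_anti| exact: f_mono].
  + apply: (sandwich (u := f x1 y1) (w := f x2 y2)) => //; [exact: f_mono| exact: f_anti].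
Qed.

Lemma val_le (R : realType) n (E : finType) (G : computation n E) s p (v : E -> R) e f :
  (if s then nondecreasing_var G p v else nonincreasing_var G p v) ->
  proc G e = p -> proc G f = p -> ple G e f -> le_s s (v e) (v f).
Proof.
move=> hm ep fp /orP [/eqP ->|pef]; first by rewrite /le_s; case: s {hm}.
by case: s hm => hm; rewrite /le_s; apply: hm.
Qed.

Lemma le_sN (R : realType) s (u v : R) : le_s (~~ s) u v = le_s s v u.
Proof. by case: s. Qed.

Lemma var_cases (R : realType) n (E : finType) (G : computation n E) s p (v : E -> R)
  (C1 C2 : {set E}) :
  (if s then nondecreasing_var G p v else nonincreasing_var G p v) ->
  consistent G C1 -> consistent G C2 -> C1 != set0 -> C2 != set0 ->
  ((var_at G p v (C1 :&: C2) = var_at G p v C1 /\ le_s s (var_at G p v C1) (var_at G p v C2)) \/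
   (var_at G p v (C1 :&: C2) = var_at G p v C2 /\ le_s s (var_at G p v C2) (var_at G p v C1))) /\
  ((var_at G p v (C1 :|: C2) = var_at G p v C1 /\ le_s (~~ s) (var_at G p v C1) (var_at G p v C2)) \/
   (var_at G p v (C1 :|: C2) = var_at G p v C2 /\ le_s (~~ s) (var_at G p v C2) (var_at G p v C1))).
Proof.
move=> hm c1 c2 n1 n2.
have [l1 H1] := last_exists (bot_in p c1 n1).
have [l2 H2] := last_exists (bot_in p c2 n2).
have l1p : proc G l1 = p by case/and3P: H1 => _ /eqP.
have l2p : proc G l2 = p by case/and3P: H2 => _ /eqP.
rewrite (var_atE v H1) (var_atE v H2) !le_sN; split.
- case: (meet_last c1 c2 H1 H2) => [[H3 h]|[H3 h]]; rewrite (var_atE v H3); [left|right];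
    split => //; exact: val_le hm _ _ h.
- case: (join_last H1 H2) => [[H3 h]|[H3 h]]; rewrite (var_atE v H3); [left|right];
    split => //; exact: val_le hm _ _ h.
Qed.

Unset Implicit Arguments.

Theorem theorem1 (R : realType) (n : nat) (E : finType) (G : computation n E)
  (f : R -> R -> R)
  (f_mono : forall a a' b, a <= a' -> f a b <= f a' b)
  (f_anti : forall a b b', b <= b' -> f a b' <= f a b)
  (px py : 'I_n) (x y : E -> R)
  (hxy : (nondecreasing_var G px x /\ nondecreasing_var G py y) \/
         (nonincreasing_var G px x /\ nonincreasing_var G py y))
  (c : R) (op : relop) :
  regular G (fun C => eval_relop op (f (var_at G px x C) (var_at G py y C)) c).
Proof.
move=> C1 C2 [c1 [n1 _]] [c2 [n2 _]] h1 h2.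
have [s [hx hy]] : exists s, (if s then nondecreasing_var G px x else nonincreasing_var G px x) /\
   (if s then nondecreasing_var G py y else nonincreasing_var G py y).
  by case: hxy => [[a b]|[a b]]; [exists true|exists false].
have [Xm Xj] := var_cases hx c1 c2 n1 n2.
have [Ym Yj] := var_cases hy c1 c2 n1 n2.
split; [exact: key f_mono f_anti op c s _ _ _ _ _ _ Xm Ym h1 h2
       |exact: key f_mono f_anti op c (~~ s) _ _ _ _ _ _ Xj Yj h1 h2].
Qed.
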